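(* Let $n$ be a positive integer and $g=3n+1$. Then the image under $\sigma$ of $\mathcal{G}_{2n}(g,q\le 3)$ contains no pseudo-symmetric gapset, and in fact $$\sigma\big(\mathcal{G}_{2n}(g,q\le 3)\big)=\mathcal{G}_{2n+1}(g+1)\setminus\mathcal{P},$$ where $\mathcal{P}=\{G\in\mathcal{G}_{2n+1}(g+1): G \text{ is pseudo-symmetric}\}$.
   Context: A gapset is a finite set $G\subset\mathbb{N}=\{1,2,\dots\}$ such that whenever $z\in G$ and $z=x+y$ with $x,y\in\mathbb{N}$, then $x\in G$ or $y\in G$; its genus is $g=\#G$. Write $G=\{\ell_1<\dots<\ell_g\}$. The multiplicity is $m(G)=\min\{s\in\mathbb{N}:s\notin G\}$, the conductor $c(G)=\min\{s\in\mathbb{N}: s+t\notin G\ \forall t\in\mathbb{N}_0\}$, the Frobenius number $F(G)=c(G)-1$ (equal to $\ell_g$ for nonempty $G$), and the depth $q(G)=\lceil c(G)/m(G)\rceil$. $G$ is pseudo-symmetric if $F(G)=2g-2$. $G$ is pure $\kappa$-sparse if $\ell_{i+1}-\ell_i\le\kappa$ for all $i$ with equality for at least one $i$. $\mathcal{G}_\kappa(g)$ is the set of pure $\kappa$-sparse gapsets of genus $g$, and $\mathcal{G}_\kappa(g,q\le 3)$ the subset of those with depth at most $3$. For $G=\{\ell_1<\dots<\ell_g\}\in\mathcal{G}_{2n}(g)$ let $\alpha=\max\{i:\ell_{i+1}-\ell_i=2n\}$ and define $$\sigma(G)=\{1\}\cup\{\ell_i+1: 1\le i\le\alpha\}\cup\{\ell_i+2:\alpha+1\le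 i\le g\}$$ (note $\ell_1=1$, so $\sigma(G)=\{1<2<\ell_2+1<\dots<\ell_\alpha+1<\ell_{\alpha+1}+2<\dots<\ell_g+2\}$). *)

(* Defs.v *)
(* A gapset is represented by the strictly increasing list
   of its elements  [l_1; ...; l_g]. *)
From mathcomp Require Import all_boot.
Set Implicit Arguments.
Unset Strict Implicit.
Unset Printing Implicit Defensive.

Definition is_gapset (s : seq nat) : bool :=
  [&& sorted ltn s, all (fun x => 0 < x) s &
      all (fun z => all (fun x => (x \in s) || (z - x \in s)) (iota 1 z.-1)) s].

Definition genus (s : seq nat) : nat := size s.

(* multiplicity: least positive integer not in G (among 1..g+1 one is missing) *)
Definition multiplicity (s : seq nat) : nat :=
  head 0 [seq k <- iota 1 (size s).+1 | k \notin s].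

(* conductor: least c >= 1 with c, c+1, ... all outside G; for a sorted list
   this is (last element) + 1, and 1 for the empty gapset. *)
Definition conductor (s : seq nat) : nat := (last 0 s).+1.

Definition frobenius (s : seq nat) : nat := (conductor s).-1.

Definition depth (s : seq nat) : nat :=
  let c := conductor s in let m := multiplicity s in
  c %/ m + (c %% m != 0).

(* pseudo-symmetric: F = 2g - 2 (written F + 2 = 2g to avoid truncated subtraction) *)
Definition pseudo_symmetric (s : seq nat) : bool :=
  frobenius s + 2 == 2 * genus s.

Definition diffs (s : seq nat) : seq nat :=
  [seq p.2 - p.1 | p <- zip s (behead s)].

Definition pure_sparse (k : nat) (s : seq nat) : bool :=
  all (fun d => d <= k) (diffs s) && has (fun d => d == k) (diffs s).

Definition in_Gk (k g : nat) (s : seq nat) : bool :=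
  [&& is_gapset s, pure_sparse k s & genus s == g].

(* alpha = max{ i : l_{i+1} - l_i = k } (1-indexed, i in 1..g-1).
   With 0-indexed nth, l_{i+1} - l_i = nth 0 s i - nth 0 s i.-1. *)
Definition alpha (k : nat) (s : seq nat) : nat :=
  \max_(1 <= i < size s | nth 0 s i - nth 0 s i.-1 == k) i.

(* sigma(G) = {1} u {l_i + 1 : i <= alpha} u {l_i + 2 : i > alpha},
   listed in increasing order (0-indexed j corresponds to l_{j+1}). *)
Definition sigma (k : nat) (s : seq nat) : seq nat :=
  1 :: [seq nth 0 s j + (if j < alpha k s then 1 else 2) | j <- iota 0 (size s)].

(* Main.v *)
Require Import Defs.
From mathcomp Require Import all_boot zify.
Set Implicit Arguments. Unset Strict Implicit. Unset Printing Implicit Defensive.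

Lemma diffs_nil : diffs [::] = [::]. Proof. by []. Qed.
Lemma diffs_one x : diffs [:: x] = [::]. Proof. by []. Qed.
Lemma diffs_cons2 x y t : diffs [:: x, y & t] = (y - x) :: diffs (y :: t).
Proof. by []. Qed.

Lemma nth_diffs (s : seq nat) j : nth 0 (diffs s) j = nth 0 s j.+1 - nth 0 s j.
Proof.
elim: s j => [|x [|y t] IH] j; first by rewrite !nth_nil.
  by case: j => [|[|j]] //=; rewrite ?nth_nil.
rewrite diffs_cons2; case: j => [|j] //=; by rewrite ?IH.
Qed.

Lemma size_diffs (s : seq nat) : size (diffs s) = (size s).-1.
Proof. by rewrite /diffs size_map size_zip size_behead; case: s => //= x s; rewrite minnE; lia. Qed.

Lemma diffs_cat (u v : seq nat) : u != [::] -> v != [::] ->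
  diffs (u ++ v) = diffs u ++ (head 0 v - last 0 u) :: diffs v.
Proof.
move=> un vn; case: v vn => // y v _; elim: u un => // x [|x' u] IH _ /=.
  by rewrite diffs_cons2.
by rewrite diffs_cons2 IH.
Qed.

Lemma diffs_map_add c (s : seq nat) : diffs (map (addn c) s) = diffs s.
Proof.
elim: s => // x [|y t] IH //=. rewrite !diffs_cons2 -IH /=. congr (_ :: _); lia.
Qed.

Lemma diffs_split d (s : seq nat) : d \in diffs s ->
  exists s1 y z s2, s = s1 ++ [:: y, z & s2] /\ d = z - y.
Proof.
elim: s => // x [|y t] IH //. rewrite diffs_cons2 inE => /orP[/eqP ->|/IH].
  by exists [::], x, y, t.
move=> [s1 [y' [z [s2 [E ->]]]]]. by exists (x :: s1), y', z, s2; rewrite E.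
Qed.

Lemma last_cut k (s : seq nat) : k \in diffs s ->
  exists u v, [/\ s = u ++ v, u != [::], v != [::], head 0 v - last 0 u = k & k \notin diffs v].
Proof.
elim: s => // x [|y t] IH //. rewrite diffs_cons2 inE.
case kt: (k \in diffs (y :: t)).
  move: (IH kt) => [u [v [E un vn hv kv]]].
  exists (x :: u), v; split => //; first by rewrite E.
  by move: un hv; case: u {E} => //= z u _.
rewrite orbF => /eqP kE. exists [:: x], (y :: t); split => //; by rewrite ?kt ?kE.
Qed.

Lemma alpha_cut k (u v : seq nat) : u != [::] -> v != [::] -> head 0 v - last 0 u = k ->
  k \notin diffs v -> alpha k (u ++ v) = size u.
Proof.
move=> un vn hv kv. rewrite /alpha. apply/eqP; rewrite eqn_leq; apply/andP; split.
  apply/bigmax_leqP_seq => i; rewrite mem_index_iota size_cat => /andP[i1 i2] /eqP hi.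
  rewrite leqNgt; apply/negP => lt.
  move: hi; rewrite !nth_cat ltnNge (ltnW lt) /= ltnNge.
  have -> : size u <= i.-1 by lia.
  rewrite /= => hi. move/negP: kv; apply.
  have e : i - size u = (i.-1 - size u).+1 by move: lt; clear; move: (i : nat) => j; lia.
  rewrite -hi e -nth_diffs. apply: mem_nth. rewrite size_diffs. have H : forall j a b : nat, 0 < j -> j < a + b -> a < j -> j.-1 - a < b.-1 by move=> *; lia. exact: H.
have su : 0 < size u by rewrite lt0n size_eq0.
have sv : 0 < size v by rewrite lt0n size_eq0.
apply: (@leq_bigmax_seq _ _ _ (fun i => i) (size u)).
  rewrite mem_index_iota size_cat; apply/andP; split; lia.
rewrite !nth_cat ltnn subnn (_ : (size u).-1 < size u) ?nth_last; last by lia.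
by rewrite -hv; case: v vn {hv kv sv}.
Qed.

Definition sig_list (u v : seq nat) := 1 :: map succn u ++ map (addn 2) v.

Lemma sigma_cut k (u v : seq nat) : u != [::] -> v != [::] -> head 0 v - last 0 u = k ->
  k \notin diffs v -> sigma k (u ++ v) = sig_list u v.
Proof.
move=> un vn hv kv. rewrite /sigma (alpha_cut un vn hv kv) /sig_list size_cat.
congr (_ :: _). rewrite iotaD map_cat. congr (_ ++ _).
  rewrite -[in RHS](mkseq_nth 0 u) /mkseq -map_comp. apply/eq_in_map => j.
  rewrite mem_iota add0n leq0n /= => hj. by rewrite nth_cat hj addn1.
rewrite -[in RHS](mkseq_nth 0 v) /mkseq -map_comp add0n -[size u]addn0 iotaDl -map_comp. apply/eq_in_map => j _ /=.
rewrite addn0 nth_cat ltnNge leq_addr /= addKn addnC. done.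
Qed.

Definition cnt (P : pred nat) p q := count P (iota p (q - p)).

Section Cnt.
Variable P : pred nat.

Lemma cnt_split p q r : p <= q -> q <= r -> cnt P p r = cnt P p q + cnt P q r.
Proof.
move=> pq qr; rewrite /cnt (_ : r - p = (q - p) + (r - q)); last by lia.
by rewrite iotaD count_cat (_ : p + (q - p) = q); last by lia.
Qed.

Lemma cnt_le p q : cnt P p q <= q - p.
Proof. by rewrite /cnt; apply: leq_trans (count_size _ _) _; rewrite size_iota. Qed.

Lemma cnt_all p q : (forall x, p <= x < q -> P x) -> cnt P p q = q - p.
Proof.
move=> h; rewrite /cnt -{2}(size_iota p (q - p)) -count_predT.
apply: eq_in_count => x; rewrite mem_iota => hx; rewrite h //; lia.
Qed.

Lemma cnt_none p q : (forall x, p <= x < q -> ~~ P x) -> cnt P p q = 0.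
Proof.
move=> h; rewrite /cnt; apply/eqP; rewrite -leqn0 leqNgt -has_count; apply/hasP => -[x].
rewrite mem_iota => hx; move: (h x); rewrite (_ : p <= x < q); first by move/(_ isT)/negP.
lia.
Qed.

Lemma cnt_ge1 p q x : p <= x < q -> P x -> 0 < cnt P p q.
Proof.
move=> hx Px; rewrite /cnt -has_count; apply/hasP; exists x => //.
rewrite mem_iota; lia.
Qed.

Lemma cnt_pt p : P p -> cnt P p p.+1 = 1.
Proof. by move=> h; rewrite /cnt subSnn /= h. Qed.

Lemma map_sub_iota z p l : p + l <= z.+1 ->
  map (fun x => z - x) (iota p l) = rev (iota (z.+1 - (p + l)) l).
Proof.
elim: l p => // l IH p h.
rewrite /= IH; last by lia.
have e1 : z.+1 - (p.+1 + l) = z.+1 - (p + l.+1) by lia.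
have e2 : z.+1 - (p + l.+1) + l = z - p by lia.
rewrite e1; move: e2; move: (z.+1 - (p + l.+1)) => s e2.
rewrite (_ : s :: iota s.+1 l = iota s (l + 1)); last by rewrite addn1. by rewrite iotaD rev_cat /= e2.
Qed.

Lemma pairing z p q : p <= q -> q <= z.+1 ->
  (forall x, p <= x < q -> P x || P (z - x)) ->
  q - p <= cnt P p q + cnt P (z.+1 - q) (z.+1 - p).
Proof.
move=> pq qz h.
have e : cnt P (z.+1 - q) (z.+1 - p) = count (fun x => P (z - x)) (iota p (q - p)).
  rewrite /cnt -(count_map (fun x => z - x)) map_sub_iota; last by lia.
  rewrite count_rev (_ : z.+1 - (p + (q - p)) = z.+1 - q) //; last by lia.
  by rewrite (_ : z.+1 - p - (z.+1 - q) = q - p) //; lia.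
rewrite e /cnt -count_predUI.
apply: leq_trans (leq_addr _ _).
rewrite -{1}(size_iota p (q - p)) -count_predT.
apply: eq_leq; apply: eq_in_count => x; rewrite mem_iota => hx /=.
by rewrite h //; lia.
Qed.

Lemma pairing_sym z p q : p <= q -> p + q = z.+1 ->
  (forall x, p <= x < q -> P x || P (z - x)) -> q - p <= 2 * cnt P p q.
Proof.
move=> pq e h. have qz : q <= z.+1 by lia.
have := pairing pq qz h.
have -> : z.+1 - q = p by lia.
have -> : z.+1 - p = q by lia.
move=> H; rewrite mul2n -addnn; exact: H.
Qed.

End Cnt.

Definition Qs (P : pred nat) a b x :=
  (x == 1) || ((1 < x <= a.+1) && P x.-1) || ((b.+2 <= x) && P (x - 2)).
Definition Qt (P : pred nat) a b x :=
  ((0 < x) && (x.+1 <= a) && P x.+1) || ((b <= x.+2) && P x.+2).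

Definition hide (A : Prop) := A.
Ltac clear_cnt := repeat match goal with H : context [cnt _ _ _] |- _ => clear H end.
Ltac ol := clear_cnt; lia.

Section GapAbs.
Variable P : pred nat.
Hypothesis P0 : ~~ P 0.
Hypothesis Pcl : forall z x, P z -> 0 < x < z -> P x || P (z - x).

Lemma nadd x y : ~~ P x -> ~~ P y -> ~~ P (x + y).
Proof.
move=> hx hy; apply/negP => hz.
case: x hx hz => [|x] hx hz; first by rewrite add0n in hz; move/negP: hy.
case: y hy hz => [|y] hy hz; first by rewrite addn0 in hz; move/negP: hx.
have := Pcl (x := x.+1) hz; rewrite addKn; case/(_ _)/orP; first by lia.
  by move/negP: hx.
by move/negP: hy.
Qed.

Lemma pair_or z x : P z -> x <= z -> P x || P (z - x).
Proof.
move=> Pz xz; case: x xz => [|x] xz; first by rewrite subn0 Pz orbT.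
case: (ltnP x.+1 z) => h; first by apply: Pcl => //; lia.
have -> : x.+1 = z by lia. by rewrite Pz.
Qed.

Variable m : nat.
Hypothesis m0 : 0 < m.
Hypothesis mlow : forall x, 0 < x < m -> P x.
Hypothesis Pm : ~~ P m.

Lemma ge_m x : 0 < x -> ~~ P x -> m <= x.
Proof. move=> x0 nx; rewrite leqNgt; apply/negP => h; move/negP: nx; apply; apply: mlow; lia. Qed.

Lemma nmul k : ~~ P (k * m).
Proof. elim: k => [|k IH]; first by rewrite mul0n. by rewrite mulSn nadd. Qed.

Lemma jump_m a d : 1 < d -> P a -> P (a + d) -> (forall x, a < x < a + d -> ~~ P x) ->
  d <= m <= a.+1.
Proof.
move=> d1 Pa Pb gf; apply/andP; split; last first.
  apply: ge_m => //; apply: gf; lia.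
rewrite leqNgt; apply/negP => md.
have := pair_or (x := m) Pb; rewrite (negbTE Pm) /= => /(_ ltac:(ol)) h.
by move/negP: (gf (a + d - m) ltac:(ol)).
Qed.

Variable F : nat.
Hypothesis PF : P F.
Hypothesis Fmax : forall x, P x -> x <= F.

Ltac fin := unfold hide in *; lia.
Ltac spl h p q r := have h : hide _ := @cnt_split P p q r ltac:(ol) ltac:(ol).

Lemma cnt0k k : 0 < k -> k <= m -> cnt P 0 k = k.-1.
Proof.
move=> k0 km; spl e 0 1 k; rewrite /hide in e; rewrite e (@cnt_none P 0 1); last by move=> x hx; have -> : x = 0 by lia.
rewrite (@cnt_all P 1 k); first by lia. move=> x hx; apply: mlow; lia.
Qed.

Lemma Kblock c a b : P c -> b <= c -> (forall x, a < x < b -> ~~ P x) ->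
  forall x, c - b < x < c - a -> P x.
Proof.
move=> Pc bc gf x hx.
have := pair_or (x := c - x) Pc ltac:(ol).
rewrite (_ : c - (c - x) = x); last by ol.
by rewrite (negbTE (gf (c - x) ltac:(ol))).
Qed.

Lemma both_gaps z x0 : P z -> 0 < x0 -> x0.*2 < z -> P x0 -> P (z - x0) -> z <= F ->
  z.+3 <= 2 * cnt P 0 F.+1.
Proof.
move=> Pz x00 hx Px Pzx zF.
have h1 : x0 - 0 <= cnt P 0 x0 + cnt P (z.+1 - x0) (z.+1 - 0).
  by apply: pairing; [lia|lia|move=> x hxx; apply: pair_or => //; lia].
have h2 : z - x0 - x0.+1 <= 2 * cnt P x0.+1 (z - x0).
  by apply: (pairing_sym (z := z)); [lia|lia|move=> x hxx; apply: pair_or => //; lia].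
spl e1 0 x0 F.+1; spl e2 x0 x0.+1 F.+1; spl e3 x0.+1 (z - x0) F.+1; spl e4 (z - x0) (z - x0).+1 F.+1.
spl e5 (z - x0).+1 z.+1 F.+1.
rewrite cnt_pt // in e2; rewrite cnt_pt // in e4.
rewrite (_ : z.+1 - x0 = (z - x0).+1) in h1; last by ol.
rewrite !subn0 in h1. fin.
Qed.

Lemma Gside n a : 1 < n -> P a -> P (a + 2 * n) ->
  (forall x, a < x < a + 2 * n -> ~~ P x) -> cnt P 0 F.+1 = 3 * n + 1 ->
  F.+1 <= 3 * m ->
  [/\ 2 * n <= m, m <= a.+1, a <= 2 * m, (forall c, P c -> c < a + 2 * n + m) & F != 6 * n].
Proof.
move=> n1 Pa Pb gf gen dep.
have /andP[hm1 hm2] := jump_m (d := 2 * n) ltac:(ol) Pa Pb gf.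
have bF := Fmax Pb.
have X : a.+1 - 2 * n <= 2 * cnt P (2 * n) a.+1.
  apply: (pairing_sym (z := a + 2 * n)); [lia | lia | ].
  move=> x hx; apply: pair_or => //; lia.
spl e1 0 (2 * n) F.+1; spl e2 (2 * n) a.+1 F.+1; spl e3 a.+1 (a + 2 * n) F.+1.
spl e4 (a + 2 * n) (a + 2 * n).+1 F.+1.
have c1 := @cnt0k (2 * n) ltac:(ol) hm1.
have c3 := @cnt_none P a.+1 (a + 2 * n) (fun x h => gf x ltac:(ol)).
have c4 := cnt_pt Pb.
have RF : a + 2 * n < F -> 0 < cnt P (a + 2 * n).+1 F.+1.
  move=> h; apply: (@cnt_ge1 P _ _ F) => //; lia.
have N1 : a <= 2 * m.
  rewrite leqNgt; apply/negP => h.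
  case: (ltngtP (a + 2 * n) F) => hF; [have := RF hF | | ]; fin.
have N2 : forall c, P c -> c < a + 2 * n + m.
  move=> c Pc; rewrite ltnNge; apply/negP => hc.
  have cF := Fmax Pc.
  have K := @Kblock c a (a + 2 * n) Pc ltac:(ol) gf.
  have c0m := @cnt0k m m0 (leqnn m).
  case: (leqP c (a.*2).+1) => hca.
    spl f1 0 m F.+1; spl f2 m (c - (a + 2 * n)).+1 F.+1; spl f3 (c - (a + 2 * n)).+1 (c - a) F.+1.
    spl f4 (c - a) (a + 2 * n) F.+1; spl f5 (a + 2 * n) (a + 2 * n).+1 F.+1.
    spl f6 (a + 2 * n).+1 c F.+1; spl f7 c c.+1 F.+1.
    have g3 := @cnt_all P (c - (a + 2 * n)).+1 (c - a) (fun x h => K x ltac:(ol)).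
    have g7 := cnt_pt Pc. fin.
  have hb : (a + 2 * n) <= c - (a + 2 * n) + 1.
    rewrite leqNgt; apply/negP => h.
    set x := maxn (c - (a + 2 * n)).+1 a.+1.
    have := K x ltac:(ol). by rewrite (negbTE (gf x ltac:(ol))).
  spl f1 0 m F.+1; spl f2 m (c - (a + 2 * n)).+1 F.+1; spl f3 (c - (a + 2 * n)).+1 (c - a) F.+1.
  spl f4 (c - a) c F.+1; spl f5 c c.+1 F.+1.
  have g3 := @cnt_all P (c - (a + 2 * n)).+1 (c - a) (fun x h => K x ltac:(ol)).
  have g5 := cnt_pt Pc. fin.
split => //; apply/eqP => F6.
case: (ltngtP (a + 2 * n) F) => hF; [ | lia | ]; last first.
  case P2: (P (2 * n)).
    have := @both_gaps (a + 2 * n) (2 * n) Pb ltac:(ol) ltac:(ol) P2.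
    rewrite (_ : a + 2 * n - 2 * n = a) ?Pa; last by ol. move=> /(_ isT ltac:(ol)); lia.
  have := nadd (negbT P2) (negbT P2). by rewrite (_ : 2 * n + 2 * n = a) ?Pa; last by ol.
have m3 : m <= 3 * n.
  have c0m := @cnt0k m m0 (leqnn m).
  spl f1 0 m F.+1; spl f2 m (a + 2 * n) F.+1; spl f3 (a + 2 * n) (a + 2 * n).+1 F.+1.
  spl f4 (a + 2 * n).+1 F F.+1. have := cnt_pt PF. fin.
have := N2 F PF => hFb.
have Px0 : P (F - (a + 2 * n)) by apply: mlow; lia.
have := @both_gaps F (F - (a + 2 * n)) PF ltac:(ol) ltac:(ol) Px0.
rewrite (_ : F - (F - (a + 2 * n)) = a + 2 * n) ?Pb; last by ol.
move=> /(_ isT (leqnn F)); lia.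
Qed.


Lemma Hside n a : 1 < n -> P a -> P (a + (2 * n + 1)) ->
  (forall x, a < x < a + (2 * n + 1) -> ~~ P x) -> cnt P 0 F.+1 = 3 * n + 2 ->
  F != 6 * n + 2 ->
  [/\ 2 * n + 1 <= m, m <= a.+1, a.+2 <= 2 * m, (forall c, P c -> c < a + (2 * n + 1) + m) &
      F.+2 <= 3 * m] /\
     ((forall a1, a1 + (2 * n + 1) <= a -> P a1 -> P (a1 + (2 * n + 1)) ->
          (forall x, a1 < x < a1 + (2 * n + 1) -> ~~ P x) -> False) /\
      (forall c1, a + (2 * n + 1) <= c1 -> P c1 -> P (c1 + 2 * n) ->
          (forall x, c1 < x < c1 + 2 * n -> ~~ P x) -> False)).
Proof.
move=> n1 Pa Pb gf gen FPS.
have /andP[hm1 hm2] := jump_m (d := 2 * n + 1) ltac:(ol) Pa Pb gf.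
have bF := Fmax Pb.
have X : a.+1 - (2 * n + 1) <= 2 * cnt P (2 * n + 1) a.+1.
  apply: (pairing_sym (z := a + (2 * n + 1))); [lia | lia | ].
  move=> x hx; apply: pair_or => //; lia.
spl e1 0 (2 * n + 1) F.+1; spl e2 (2 * n + 1) a.+1 F.+1; spl e3 a.+1 (a + (2 * n + 1)) F.+1.
spl e4 (a + (2 * n + 1)) (a + (2 * n + 1)).+1 F.+1.
have c1 := @cnt0k (2 * n + 1) ltac:(ol) hm1.
have c3 := @cnt_none P a.+1 (a + (2 * n + 1)) (fun x h => gf x ltac:(ol)).
have c4 := cnt_pt Pb.
have RF : a + (2 * n + 1) < F -> 0 < cnt P (a + (2 * n + 1)).+1 F.+1.
  move=> h; apply: (@cnt_ge1 P _ _ F) => //; lia.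
have c0m := @cnt0k m m0 (leqnn m).
have full : F.+1 <= 2 * cnt P 0 F.+1.
  have : F.+1 - 0 <= 2 * cnt P 0 F.+1.
    by apply: (pairing_sym (z := F)); [lia|lia|move=> x hxx; apply: pair_or => //; lia].
  by rewrite subn0.
have M1 : a.+2 <= 2 * m.
  rewrite leqNgt; apply/negP => h.
  have hFb : F = a + (2 * n + 1).
    case: (ltngtP (a + (2 * n + 1)) F) => hF; [have := RF hF | | ]; fin.
  have hm : m = 2 * n + 1 by fin.
  have [ha|ha] : a = 4 * n + 1 \/ a = 4 * n + 2 by fin.
    by move/eqP: FPS; lia.
  by have := nmul 2; rewrite (_ : 2 * m = a) ?Pa; last by ol.
have M2 : forall c, P c -> c < a + (2 * n + 1) + m.
  move=> c Pc; rewrite ltnNge; apply/negP => hc.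
  have cF := Fmax Pc.
  have K := @Kblock c a (a + (2 * n + 1)) Pc ltac:(ol) gf.
  spl f1 0 m F.+1; spl f2 m (c - (a + (2 * n + 1))).+1 F.+1.
  spl f3 (c - (a + (2 * n + 1))).+1 (c - a) F.+1.
  spl f4 (c - a) c F.+1; spl f5 c c.+1 F.+1.
  have g3 := @cnt_all P (c - (a + (2 * n + 1))).+1 (c - a) (fun x h => K x ltac:(ol)).
  have g5 := cnt_pt Pc. fin.
have M3 : F.+2 <= 3 * m.
  rewrite leqNgt; apply/negP => h.
  have hm : m = 2 * n + 1 by fin.
  have [hF|hF] : F = 6 * n + 2 \/ F = 6 * n + 3 by fin.
    by move/eqP: FPS; lia.
  by have := nmul 3; rewrite (_ : 3 * m = F) ?PF; last by ol.
split; first by split.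
split.
- move=> a1 ha1 Pa1 Pb1 gf1.
  have K := @Kblock (a + (2 * n + 1)) a1 (a1 + (2 * n + 1)) Pb ltac:(ol) gf1.
  spl f1 0 (2 * n + 1) F.+1; spl f2 (2 * n + 1) (a + (2 * n + 1) - (a1 + (2 * n + 1))).+1 F.+1.
  spl f3 (a + (2 * n + 1) - (a1 + (2 * n + 1))).+1 (a + (2 * n + 1) - a1) F.+1.
  spl f4 (a + (2 * n + 1) - a1) (a + (2 * n + 1)) F.+1.
  spl f5 (a + (2 * n + 1)) (a + (2 * n + 1)).+1 F.+1.
  have g3 := @cnt_all P (a + (2 * n + 1) - (a1 + (2 * n + 1))).+1 (a + (2 * n + 1) - a1)
     (fun x h => K x ltac:(ol)).
  fin.
- move=> cc hc1 Pc1 Pc2 gf2.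
  have c2F := Fmax Pc2.
  have P2n : P (2 * n) by apply: mlow; lia.
  have hc2 : cc + 2 * n <= 6 * n + 1.
    have := @both_gaps (cc + 2 * n) (2 * n) Pc2 ltac:(ol) ltac:(ol) P2n.
    rewrite (_ : cc + 2 * n - 2 * n = cc) ?Pc1; last by ol.
    move=> /(_ isT c2F); lia.
  have := pair_or (x := cc + 2 * n - m) Pc2 ltac:(ol).
  rewrite (_ : cc + 2 * n - (cc + 2 * n - m) = m); last by ol.
  rewrite (negbTE Pm) orbF (negbTE (gf (cc + 2 * n - m) ltac:(ol))). done.
Qed.

Lemma sig_closed a b : a < b -> (forall x, a < x < b -> ~~ P x) -> a <= 2 * m ->
  m <= a.+1 -> (forall c, P c -> c < b + m) ->
  forall z x, Qs P a b z -> 0 < x < z -> Qs P a b x || Qs P a b (z - x).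
Proof.
move=> ab gf a2m ma bnd.
have NQ : forall x, 0 < x -> ~~ Qs P a b x ->
   [/\ 1 < x, m < x, (x <= a.+1 -> ~~ P x.-1) & (b.+2 <= x -> ~~ P (x - 2))].
  move=> x x0; rewrite /Qs => /norP[/norP[h1 h2] h3].
  have q1 : 1 < x by apply/negP => hx; move/negP: h1; apply; apply/eqP; lia.
  have q3 : x <= a.+1 -> ~~ P x.-1 by move=> hx; apply: contra h2 => ->; rewrite q1 hx.
  have q4 : b.+2 <= x -> ~~ P (x - 2) by move=> hx; apply: contra h3 => ->; rewrite hx.
  split => //. case: (leqP x a.+1) => hx; last by ol.
  have := ge_m (x := x.-1) ltac:(ol) (q3 hx). lia.
have NQadd : forall x y, 0 < x -> 0 < y -> ~~ Qs P a b x -> ~~ Qs P a b y -> ~~ Qs P a b (x + y).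
  move=> x y x0 y0 nx ny.
  have [x1 x2 x3 x4] := NQ x x0 nx; have [y1 y2 y3 y4] := NQ y y0 ny.
  have hP : ~~ P (x + y - 2).
    case: (leqP (b + m) (x + y - 2)) => hbm.
      by apply/negP => /bnd; lia.
    have px : ~~ P x.-1.
      case: (leqP x a.+1) => hx; first exact: x3.
      case: (leqP x b) => hxb; first (apply: gf; lia). lia.
    have py : ~~ P y.-1.
      case: (leqP y a.+1) => hy; first exact: y3.
      case: (leqP y b) => hyb; first (apply: gf; lia). lia.
    have := nadd px py. by rewrite (_ : x.-1 + y.-1 = x + y - 2) //; lia.
  rewrite /Qs; apply/negP => /orP[/orP[/eqP h|/andP[h _]]|/andP[_ h]]; [lia | lia | ].
  by move/negP: hP.
move=> z x Qz hx.
case Qx: (Qs P a b x) => //=; case Qzx: (Qs P a b (z - x)) => //.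
have := NQadd x (z - x) ltac:(ol) ltac:(ol) (negbT Qx) (negbT Qzx).
by rewrite subnKC ?Qz //; lia.
Qed.

Lemma tau_closed a b : a.+2 < b -> (forall x, a < x < b -> ~~ P x) -> a.+2 <= 2 * m ->
  m <= a.+1 -> (forall c, P c -> c < b + m) ->
  ~~ Qt P a b 0 /\ forall z x, Qt P a b z -> 0 < x < z -> Qt P a b x || Qt P a b (z - x).
Proof.
move=> ab gf a2m ma bnd.
split; first by rewrite /Qt /= (_ : b <= 2 = false) //; lia.
have NQ : forall x, 0 < x -> ~~ Qt P a b x ->
   [/\ m <= x.+1, (x.+1 <= a -> ~~ P x.+1) & (b <= x.+2 -> ~~ P x.+2)].
  move=> x x0; rewrite /Qt => /norP[h2 h3].
  have q3 : x.+1 <= a -> ~~ P x.+1 by move=> hx; apply: contra h2 => ->; rewrite x0 hx.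
  have q4 : b <= x.+2 -> ~~ P x.+2 by move=> hx; apply: contra h3 => ->; rewrite hx.
  split => //. case: (leqP x.+1 a) => hx; last by ol.
  exact: ge_m (q3 hx).
have NQadd : forall x y, 0 < x -> 0 < y -> ~~ Qt P a b x -> ~~ Qt P a b y -> ~~ Qt P a b (x + y).
  move=> x y x0 y0 nx ny.
  have [x1 x3 x4] := NQ x x0 nx; have [y1 y3 y4] := NQ y y0 ny.
  have hP : ~~ P (x + y).+2.
    case: (leqP (b + m) (x + y).+2) => hbm.
      by apply/negP => /bnd; lia.
    have px : ~~ P x.+1.
      case: (leqP x.+1 a) => hx; first exact: x3.
      case: (ltnP x.+1 b) => hxb; first (apply: gf; lia). lia.
    have py : ~~ P y.+1.
      case: (leqP y.+1 a) => hy; first exact: y3.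
      case: (ltnP y.+1 b) => hyb; first (apply: gf; lia). lia.
    have := nadd px py. by rewrite (_ : x.+1 + y.+1 = (x + y).+2) //; lia.
  rewrite /Qt; apply/negP => /orP[/andP[/andP[_ h] _]|/andP[_ h]]; [lia | ].
  by move/negP: hP.
move=> z x Qz hx.
case Qx: (Qt P a b x) => //=; case Qzx: (Qt P a b (z - x)) => //.
have := NQadd x (z - x) ltac:(ol) ltac:(ol) (negbT Qx) (negbT Qzx).
by rewrite subnKC ?Qz //; lia.
Qed.

End GapAbs.

Ltac clean := repeat match goal with
 | H : ?T |- _ => lazymatch type of T with Prop =>
     lazymatch T with
      | is_true (leq _ _) => fail
      | is_true (leq _ _ && leq _ _) => fail
      | is_true (negb (eq_op _ _)) => fail
      | @eq _ _ _ => fail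
      | _ => clear H
     end end end.
Ltac clia := clean; lia.

Lemma depth3 c m : 0 < m -> (c %/ m + (c %% m != 0) <= 3) = (c <= 3 * m).
Proof.
move=> m0. have e : (c <= 3 * m) = (c %/ m * m + c %% m <= 3 * m) by rewrite -divn_eq.
rewrite e. have := ltn_pmod c m0.
move: (c %/ m) (c %% m) => q r hr.
case: (eqVneq r 0) => [->|rn] /=; rewrite ?addn0.
  by rewrite leq_pmul2r.
apply/idP/idP => h.
  have : q * m <= 2 * m by rewrite leq_pmul2r //; lia.
  lia.
rewrite leqNgt; apply/negP => hq.
have : 3 * m <= q * m by rewrite leq_pmul2r //; lia.
lia.
Qed.

Lemma sorted_le_last (s : seq nat) x : sorted ltn s -> x \in s -> x <= last 0 s.
Proof.
rewrite (sorted_pairwise ltn_trans).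
case/lastP: s => // s l; rewrite last_rcons -cats1 pairwise_cat => /and3P[/allrelP h _ _].
rewrite mem_cat inE => /orP[xs|/eqP -> //]. by apply: ltnW; apply: h; rewrite ?inE.
Qed.

Lemma sorted_head_le (s : seq nat) x : sorted ltn s -> x \in s -> head 0 s <= x.
Proof.
case: s => // y t; rewrite (sorted_pairwise ltn_trans) /= => /andP[/allP h _].
by rewrite inE => /orP[/eqP -> //|/h /ltnW].
Qed.

Lemma mem_last0 (s : seq nat) : s != [::] -> last 0 s \in s.
Proof. by case: s => // y t _ /=; apply: mem_last. Qed.

Lemma mem_head0 (s : seq nat) : s != [::] -> head 0 s \in s.
Proof. by case: s => // y t _ /=; rewrite inE eqxx. Qed.

Lemma cut_props (u v : seq nat) : u != [::] -> v != [::] -> sorted ltn (u ++ v) ->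
  [/\ forall x, (x \in u) = (x \in u ++ v) && (x <= last 0 u),
      forall x, (x \in v) = (x \in u ++ v) && (head 0 v <= x),
      last 0 u < head 0 v &
      forall x, last 0 u < x < head 0 v -> x \notin u ++ v].
Proof.
move=> un vn srt.
have := srt; rewrite (sorted_pairwise ltn_trans) pairwise_cat => /and3P[/allrelP ar pu pv].
have su : sorted ltn u by rewrite (sorted_pairwise ltn_trans).
have sv : sorted ltn v by rewrite (sorted_pairwise ltn_trans).
have ab : last 0 u < head 0 v by apply: ar; [apply: mem_last0 | apply: mem_head0].
have hu : forall x, x \in u -> x <= last 0 u by move=> x; apply: sorted_le_last.
have hv : forall x, x \in v -> head 0 v <= x by move=> x; apply: sorted_head_le.
split => //.
- move=> x; rewrite mem_cat; case xu: (x \in u) => /=; first by rewrite hu.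
  case xv: (x \in v) => //=. have := hv x xv => hh. apply/esym/negbTE; rewrite -ltnNge; lia.
- move=> x; rewrite mem_cat; case xv: (x \in v) => /=; first by rewrite hv ?orbT.
  rewrite orbF; case xu: (x \in u) => //=. have := hu x xu => hh. apply/esym/negbTE; rewrite -ltnNge; lia.
- move=> x hx; rewrite mem_cat; apply/norP; split; apply/negP => h.
    by have := hu x h; lia.
  by have := hv x h; lia.
Qed.

Lemma adj_gap (p q : seq nat) x y : sorted ltn (p ++ [:: x, y & q]) ->
  forall t, x < t < y -> t \notin p ++ [:: x, y & q].
Proof.
rewrite -cat_rcons => srt.
have [_ _ _] := cut_props (u := rcons p x) (v := y :: q) ltac:(by case: p {srt}) isT srt.
by rewrite last_rcons /=; apply.
Qed.

Lemma gapset_P s : is_gapset s ->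
  [/\ sorted ltn s, forall x, x \in s -> 0 < x &
      forall z x, z \in s -> 0 < x < z -> (x \in s) || (z - x \in s)].
Proof.
case/and3P => srt /allP pos /allP cl; split => // z x zs hx.
have := cl z zs => /allP; apply; rewrite mem_iota; have := pos z zs; lia.
Qed.

Lemma P_gapset s : sorted ltn s -> (forall x, x \in s -> 0 < x) ->
  (forall z x, z \in s -> 0 < x < z -> (x \in s) || (z - x \in s)) -> is_gapset s.
Proof.
move=> srt pos cl; apply/and3P; split => //; first by apply/allP.
apply/allP => z zs; apply/allP => x; rewrite mem_iota => hx; apply: cl => //.
have := pos z zs; lia.
Qed.

Lemma count_iota_mem (s : seq nat) N : uniq s -> (forall x, x \in s -> x < N) ->
  cnt (fun x => x \in s) 0 N = size s.
Proof.
move=> us hN; rewrite /cnt subn0 -size_filter; apply: perm_size.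
apply: uniq_perm; [by rewrite filter_uniq ?iota_uniq | done | ].
move=> x; rewrite mem_filter mem_iota /=. case xs: (x \in s) => //=. by have := hN x xs; lia.
Qed.

Lemma head_filter_iota (Q : pred nat) p k x : p <= x < p + k -> Q x ->
  let h := head 0 [seq y <- iota p k | Q y] in
  [/\ p <= h < p + k, Q h & forall y, p <= y < h -> ~~ Q y].
Proof.
elim: k p => [|k IH] p hx Qx /=; first by lia.
case Qp: (Q p) => /=.
  split => //; first by lia. move=> y hy; lia.
have hx' : p.+1 <= x < p.+1 + k.
  have xp : x != p by apply/eqP => e; rewrite -e Qx in Qp.
  lia.
have [h1 h2 h3] := IH p.+1 hx' Qx; split => //; first by lia.
move=> y hy; case: (eqVneq y p) => [->|yp]; first by rewrite Qp.
apply: h3; lia.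
Qed.

Lemma multP (s : seq nat) : uniq s -> (forall x, x \in s -> 0 < x) ->
  [/\ 0 < multiplicity s, forall x, 0 < x < multiplicity s -> x \in s & multiplicity s \notin s].
Proof.
move=> us pos.
have [x hx nx] : exists2 x, 1 <= x < 1 + (size s).+1 & x \notin s.
  case: (boolP (all (fun x => x \in s) (iota 1 (size s).+1))) => h.
    have := uniq_leq_size (iota_uniq 1 (size s).+1) (allP h). by rewrite size_iota ltnn.
  move/allPn: h => [x]; rewrite mem_iota => h1 h2; by exists x.
have := head_filter_iota (Q := fun k => k \notin s) hx nx.
rewrite /multiplicity /=. set h := head 0 _ => -[h1 h2 h3].
split => //; first by lia.
move=> y hy; have := h3 y ltac:(lia). by rewrite negbK.
Qed.

Lemma mult_eq (s : seq nat) m0 : uniq s -> (forall x, x \in s -> 0 < x) -> 0 < m0 ->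
  (forall x, 0 < x < m0 -> x \in s) -> m0 \notin s -> multiplicity s = m0.
Proof.
move=> us pos m00 low nm.
have [h1 h2 h3] := multP us pos.
case: (ltngtP (multiplicity s) m0) => // h.
  by move: h3; rewrite low //; lia.
by move: nm; rewrite h2 //; lia.
Qed.

Lemma mem_map_S (u : seq nat) y : (y \in map succn u) = (0 < y) && (y.-1 \in u).
Proof.
case: y => [|y] /=; last by rewrite (mem_map succn_inj).
by apply/negbTE/mapP => -[].
Qed.

Lemma mem_map_2 (v : seq nat) y : (y \in map (addn 2) v) = (1 < y) && (y - 2 \in v).
Proof.
case: y => [|[|y]] /=; try by apply/negbTE/mapP => -[].
have inj : injective (addn 2) by move=> a b /eqP; rewrite eqn_add2l => /eqP.
by rewrite (_ : y.+2 = 2 + y) // (mem_map inj) addKn.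
Qed.

Lemma sig_sorted (u v : seq nat) : sorted ltn (u ++ v) -> (forall x, x \in u ++ v -> 0 < x) ->
  sorted ltn (sig_list u v).
Proof.
move=> srt pos. rewrite /sig_list (sorted_pairwise ltn_trans) /=.
move: srt; rewrite (sorted_pairwise ltn_trans) !pairwise_cat => /and3P[ar pu pv].
apply/andP; split.
  rewrite all_cat !all_map; apply/andP; split; apply/allP => x xi //=.
  by have := pos x; rewrite mem_cat xi => /(_ isT).
apply/and3P; split.
- apply/allrelP => x y /mapP[x' x'u ->] /mapP[y' y'v ->].
  have := (allrelP ar) x' y' x'u y'v. lia.
- by rewrite pairwise_map.
- by rewrite pairwise_map.
Qed.

Lemma mem_sig (u v : seq nat) y : u != [::] -> v != [::] -> sorted ltn (u ++ v) ->
  (forall x, x \in u ++ v -> 0 < x) ->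
  (y \in sig_list u v) = Qs (fun x => x \in u ++ v) (last 0 u) (head 0 v) y.
Proof.
move=> un vn srt pos. have [mu mv ab gf] := cut_props un vn srt.
rewrite /sig_list /Qs in_cons mem_cat mem_map_S mem_map_2 mu mv.
case: y => [|[|y]] //=.
rewrite !subSS !subn0 !ltnS.
by case: (y.+1 \in u ++ v); case: (y \in u ++ v); rewrite /= ?andbT ?andbF.
Qed.

Lemma diffs_S (u : seq nat) : diffs (map succn u) = diffs u.
Proof. rewrite -[RHS](diffs_map_add 1 u); congr diffs; apply: eq_map => x; by rewrite add1n. Qed.

Lemma diffs_sig (u v : seq nat) : u != [::] -> v != [::] ->
  diffs (sig_list u v) = head 0 u :: diffs u ++ (head 0 v + 2 - (last 0 u).+1) :: diffs v.
Proof.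
move=> un vn. rewrite /sig_list -cat1s.
have mun : map succn u != [::] by rewrite -size_eq0 size_map size_eq0.
have mvn : map (addn 2) v != [::] by rewrite -size_eq0 size_map size_eq0.
rewrite diffs_cat //; last by rewrite -size_eq0 size_cat size_map; case: (u) un.
rewrite diffs_cat // diffs_S diffs_map_add /=.
case: u un {mun} => // x t _ /=. case: v vn {mvn} => // y w _ /=.
by rewrite last_map subSS subn0 addnC.
Qed.

Lemma last_sig (u v : seq nat) : v != [::] -> last 0 (sig_list u v) = last 0 v + 2.
Proof.
rewrite /sig_list /= last_cat. case: v => // y t _ /=. by rewrite last_map addnC.
Qed.

Lemma size_sig (u v : seq nat) : size (sig_list u v) = (size u + size v).+1.
Proof. by rewrite /= size_cat !size_map. Qed.

Lemma partA n G : 1 < n -> in_Gk (2 * n) (3 * n + 1) G -> depth G <= 3 ->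
  in_Gk (2 * n + 1) (3 * n + 1 + 1) (sigma (2 * n) G) && ~~ pseudo_symmetric (sigma (2 * n) G).
Proof.
move=> n1 /and3P[gs /andP[pall phas] /eqP sz] dp.
have [srt pos cl] := gapset_P gs.
have uq : uniq G := sorted_uniq ltn_trans ltnn srt.
have kin : 2 * n \in diffs G by case/hasP: phas => x xi /eqP <-.
have [u [v [EG un vn hv kv]]] := last_cut kin.
subst G. rewrite (sigma_cut un vn hv kv).
have [mu mv ab gf] := cut_props un vn srt.
set P : pred nat := fun x => x \in u ++ v.
set F := last 0 (u ++ v).
have uvn : u ++ v != [::] by rewrite -size_eq0 size_cat; case: (u) un.
have GF : forall x, P x -> x <= F := fun x => sorted_le_last srt.
have PF : P F := mem_last0 uvn.
have gen : cnt P 0 F.+1 = 3 * n + 1.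
  by rewrite /P count_iota_mem // => x /GF; rewrite /F; clia.
have [m0 mlow mnot] := multP uq pos.
set m := multiplicity (u ++ v) in m0 mlow mnot.
have dep : F.+1 <= 3 * m by move: dp; rewrite /depth /conductor depth3.
have P0 : ~~ P 0 by apply/negP => /pos.
have Pa : P (last 0 u) by rewrite /P mem_cat mem_last0.
have Pb : P (last 0 u + 2 * n).
  by rewrite /P -hv subnKC ?(ltnW ab) // mem_cat mem_head0 ?orbT.
have gfP : forall x, last 0 u < x < last 0 u + 2 * n -> ~~ P x.
  move=> x hx; apply: gf; move: hx hv ab; clear; clia.
have [hm1 hm2 N1 N2 N3] := @Gside P P0 cl m m0 mlow mnot F PF GF n (last 0 u) n1 Pa Pb gfP gen dep.
have hb : head 0 v = last 0 u + 2 * n by move: hv ab; clear; clia.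
have N2' : forall c, P c -> c < head 0 v + m by move=> c Pc; rewrite hb; exact: N2.
have sl := @sig_closed P P0 cl m m0 mlow mnot F PF (last 0 u) (head 0 v) ab gf N1 hm2 N2'.
have ms := fun y => @mem_sig u v y un vn srt pos.
have h1 : 1 \in u ++ v by apply: mlow; clia.
have hd1 : head 0 u = 1.
  have := sorted_head_le srt h1; have := pos _ (mem_head0 uvn).
  by case: (u) un => //= x t _; clia.
have dG := diffs_cat un vn; rewrite hv in dG.
move: pall; rewrite dG all_cat /= => /and3P[pu _ pv].
apply/andP; split; last first.
  rewrite /pseudo_symmetric /frobenius /conductor /genus last_sig // size_sig.
  have : last 0 v = F by rewrite /F last_cat; case: (v) vn.
  move: N3 => /eqP N3 e. apply/eqP => h. apply: N3. move: sz. rewrite /genus size_cat. clia.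
apply/and3P; split.
- apply: P_gapset; first exact: sig_sorted.
  + move=> x; rewrite ms /Qs; case/orP => [/orP[/eqP -> //|/andP[h _]]|/andP[h _]]; clia.
  + move=> z x; rewrite !ms; exact: sl.
- rewrite /pure_sparse diffs_sig // hd1 /= all_cat /= has_cat /=.
  have -> : head 0 v + 2 - (last 0 u).+1 = 2 * n + 1 by clia.
  rewrite eqxx !orbT andbT leqnn /=.
  apply/and3P; split; first by clia.
  + by apply: sub_all pu => x /=; clia.
  + by apply: sub_all pv => x /=; clia.
- move: sz; rewrite /genus size_sig size_cat => ->. by apply/eqP; clia.
Qed.

Lemma adj_lt (p q : seq nat) x y : sorted ltn (p ++ [:: x, y & q]) -> x < y.
Proof.
rewrite (sorted_pairwise ltn_trans) pairwise_cat => /and3P[_ _] /= /andP[/andP[h _] _].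
exact: h.
Qed.

Lemma partB n H : 1 < n -> in_Gk (2 * n + 1) (3 * n + 1 + 1) H -> ~~ pseudo_symmetric H ->
  exists G, [/\ in_Gk (2 * n) (3 * n + 1) G, depth G <= 3 & sigma (2 * n) G = H].
Proof.
move=> n1 /and3P[gs /andP[pall phas] /eqP sz] nps.
have [srt pos cl] := gapset_P gs.
have uq : uniq H := sorted_uniq ltn_trans ltnn srt.
have kin : 2 * n + 1 \in diffs H by case/hasP: phas => x xi /eqP <-.
have [u' [v' [EH un vn hv kv]]] := last_cut kin.
subst H.
have [mu mv ab gf] := cut_props un vn srt.
set P : pred nat := fun x => x \in u' ++ v'.
set F := last 0 (u' ++ v').
have uvn : u' ++ v' != [::] by rewrite -size_eq0 size_cat; case: (u') un.
have GF : forall x, P x -> x <= F := fun x => sorted_le_last srt.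
have PF : P F := mem_last0 uvn.
have gen : cnt P 0 F.+1 = 3 * n + 2.
  have := sz; rewrite /genus /P count_iota_mem // => ->; clia.
have [m0 mlow mnot] := multP uq pos.
set m := multiplicity (u' ++ v') in m0 mlow mnot.
have P0 : ~~ P 0 by apply/negP => /pos.
have FPS : F != 6 * n + 2.
  move: nps; rewrite /pseudo_symmetric /frobenius /conductor /genus -/F /=.
  move: sz; rewrite /genus => -> /eqP h; apply/eqP => e; apply: h; clia.
have Pa : P (last 0 u') by rewrite /P mem_cat mem_last0.
have hb : head 0 v' = last 0 u' + (2 * n + 1) by move: hv ab; clear; lia.
have Pb : P (last 0 u' + (2 * n + 1)) by rewrite /P -hb mem_cat mem_head0 ?orbT.
have gfP : forall x, last 0 u' < x < last 0 u' + (2 * n + 1) -> ~~ P x.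
  by move=> x hx; apply: gf; clia.
have [[hm1 hm2 M1 M2 M3] [M0 M4]] :=
  @Hside P P0 cl m m0 mlow mnot F PF GF n (last 0 u') n1 Pa Pb gfP gen FPS.
set a := last 0 u' in Pa hb Pb gfP hm2 M1 M2 M0 M4 ab gf mu hv.
set b := head 0 v' in hb ab gf mv hv.
have M2' : forall c, P c -> c < b + m by move=> c Pc; rewrite hb; exact: M2.
have h1 : 1 \in u' ++ v' by apply: mlow; clia.
have hd1 : head 0 u' = 1.
  have := sorted_head_le srt h1; have := pos _ (mem_head0 uvn).
  by case: (u') un => //= x t _; clia.
have [w' Ew] : exists w', u' = 1 :: w' by move: hd1 un; case: (u') => // y t /= -> _; exists t.
have wn : w' != [::].
  apply/negP => /eqP e; move: hm2 hm1 n1; rewrite /a Ew e /=; clear; lia.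
have w'pos : forall x, x \in w' -> 1 < x.
  have := srt; rewrite Ew (sorted_pairwise ltn_trans) /= => /andP[/allP h _] x xw.
  by apply: h; rewrite mem_cat xw.
have v'ge : forall x, x \in v' -> b <= x by move=> x; rewrite mv => /andP[].
have b2 : 2 < b by clia.
set w := map predn w'. set z := map (subn^~ 2) v'.
have ew : map succn w = w'.
  rewrite /w -map_comp map_id_in // => x /w'pos /=; clia.
have ez : map (addn 2) z = v'.
  rewrite /z -map_comp map_id_in // => x /v'ge /=; clia.
have eH : u' ++ v' = sig_list w z by rewrite Ew /sig_list ew ez.
have wn2 : w != [::] by rewrite -size_eq0 size_map size_eq0.
have zn : z != [::] by rewrite -size_eq0 size_map size_eq0.
have la : a = (last 0 w).+1 by rewrite /a Ew /= -ew last_map.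
have hbz : b = 2 + head 0 z by rewrite /b -ez; case: (z) zn.
have hvG : head 0 z - last 0 w = 2 * n by clia.
have kvG : 2 * n \notin diffs z.
  rewrite -(diffs_map_add 2) ez. apply/negP => /diffs_split [s1 [c1 [c2 [s2 [Ev' ec]]]]].
  have sH : sorted ltn ((u' ++ s1) ++ [:: c1, c2 & s2]) by rewrite -catA -Ev'.
  have c1v : c1 \in v' by rewrite Ev' mem_cat inE eqxx orbT.
  have c2v : c2 \in v' by rewrite Ev' mem_cat !inE eqxx !orbT.
  have c12 : c1 < c2 := adj_lt sH.
  apply: (M4 c1).
  - have := v'ge c1 c1v; clia.
  - by rewrite /P mem_cat c1v orbT.
  - by rewrite (_ : c1 + 2 * n = c2) ?/P ?mem_cat ?c2v ?orbT //; clia.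
  - move=> t ht; rewrite /P Ev' catA; apply: adj_gap => //; clia.
have sG : sigma (2 * n) (w ++ z) = u' ++ v' by rewrite (sigma_cut wn2 zn hvG kvG) eH.
have mt : forall x, (x \in w ++ z) = Qt P a b x.
  move=> x. rewrite mem_cat /Qt.
  have -> : (x \in w) = (0 < x) && (x.+1 <= a) && P x.+1.
    rewrite -(mem_map succn_inj) ew.
    case: x => [|x] /=.
      by apply/negbTE/negP => /w'pos.
    have e : (x.+2 \in w') = (x.+2 \in u') by rewrite Ew inE.
    by rewrite e mu /P andbC.
  have -> : (x \in z) = (b <= x.+2) && P x.+2.
    have e : (x.+2 \in v') = (x \in z) by rewrite -ez mem_map_2 /= subn2.
    by rewrite -e mv /P andbC.
  done.
have sWZ : sorted ltn (w ++ z).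
  have := srt; rewrite eH /sig_list (sorted_pairwise ltn_trans) /= => /andP[_].
  rewrite pairwise_cat [pairwise _ (map succn w)]pairwise_map [pairwise _ (map (addn 2) z)]pairwise_map => /and3P[_ pw pz].
  rewrite (sorted_pairwise ltn_trans) pairwise_cat; apply/and3P; split; [ | exact pw | exact pz].
  apply/allrelP => x y xw yz.
  have hu : x.+1 \in u' by rewrite Ew inE -ew (mem_map succn_inj) xw orbT.
  move: hu; rewrite mu => /andP[_ hx].
  have hv' : y.+2 \in v' by rewrite -ez mem_map_2 /= subn2.
  have hy := v'ge _ hv'. clia.
have posWZ : forall x, x \in w ++ z -> 0 < x.
  move=> x; rewrite mt /Qt => /orP[/andP[/andP[h _] _]|/andP[h _]]; clia.
have uWZ : uniq (w ++ z) := sorted_uniq ltn_trans ltnn sWZ.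
exists (w ++ z); split => //.
  apply/and3P; split.
  - apply: P_gapset => //.
    have gfb : forall x, a < x < b -> ~~ P x := gf.
    have [_ tc] := @tau_closed P P0 cl m m0 mlow mnot F PF a b ltac:(clia) gfb M1 hm2 M2'.
    move=> z0 x; rewrite !mt; exact: tc.
  - have dG := diffs_cat wn2 zn; rewrite hvG in dG.
    have dw : diffs w = diffs w' by rewrite -ew diffs_S.
    have dz : diffs z = diffs v' by rewrite -ez diffs_map_add.
    have dH := diffs_cat un vn; rewrite hv in dH.
    have du : diffs u' = (head 0 w' - 1) :: diffs w' by rewrite Ew -cat1s diffs_cat.
    move: pall; rewrite dH du all_cat /= => /andP[/andP[_ pw'] /andP[_ pv']].
    have nw : 2 * n + 1 \notin diffs w'.
      apply/negP => /diffs_split [s1 [a1 [b1 [s2 [Ew' ea]]]]].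
      have e : u' ++ v' = (1 :: s1) ++ [:: a1, b1 & s2 ++ v'] by rewrite Ew Ew' /= -catA.
      have sH : sorted ltn ((1 :: s1) ++ [:: a1, b1 & s2 ++ v']) by rewrite -e.
      have ab1 := adj_lt sH.
      have b1u : b1 \in u' by rewrite Ew Ew' inE mem_cat !inE eqxx !orbT.
      apply: (M0 a1).
      + move: b1u; rewrite mu => /andP[_ h]; clia.
      + by rewrite /P e mem_cat !inE eqxx !orbT.
      + by rewrite (_ : a1 + (2 * n + 1) = b1) ?/P ?e ?mem_cat ?inE ?eqxx ?orbT //; clia.
      + move=> t ht; rewrite /P e; apply: adj_gap => //; clia.
    rewrite /pure_sparse dG dw dz; apply/andP; split.
      rewrite all_cat /= leqnn /=; apply/andP; split; apply/allP => d hd.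
        have := allP pw' d hd => h1'.
        have : d != 2 * n + 1 by apply/negP => /eqP ed; move: nw; rewrite -ed hd.
        clia.
      have := allP pv' d hd => h1'.
      have : d != 2 * n + 1 by apply/negP => /eqP ed; move: kv; rewrite -ed hd.
      clia.
    by rewrite has_cat /= eqxx orbT.
  - rewrite /genus size_cat !size_map; move: sz; rewrite /genus Ew size_cat /=.
    move=> h; apply/eqP; clia.
have mult : multiplicity (w ++ z) = m.-1.
  apply: mult_eq => //; first by clia.
  - move=> x hx; rewrite mt /Qt; apply/orP; left; apply/andP; split.
      apply/andP; split; clia.
    by rewrite /P; apply: mlow; clia.
  - rewrite mt /Qt negb_or; apply/andP; split.
      rewrite (_ : m.-1.+1 = m); last by clia.
      by rewrite /P (negbTE mnot) andbF.
    apply/nandP; left; clia.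
have lF : F = 2 + last 0 z.
  by rewrite /F last_cat -ez; case: (z) zn => // y t _ /=; rewrite last_map.
have lG : last 0 (w ++ z) = last 0 z by rewrite last_cat; case: (z) zn.
rewrite /depth mult /conductor depth3; last by clia.
rewrite lG. clia.
Qed.

Definition alpha_c k (s : seq nat) :=
  foldr (fun i acc => if nth 0 s i - nth 0 s i.-1 == k then maxn i acc else acc) 0
        (index_iota 1 (size s)).

Lemma alpha_c_eq k s : alpha k s = alpha_c k s.
Proof.
rewrite /alpha /alpha_c; elim: (index_iota 1 (size s)) => [|i r IH]; first by rewrite big_nil.
by rewrite big_cons /= IH.
Qed.

Definition sigma_c k (s : seq nat) : seq nat :=
  1 :: [seq nth 0 s j + (if j < alpha_c k s then 1 else 2) | j <- iota 0 (size s)].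

Lemma sigma_c_eq k s : sigma k s = sigma_c k s.
Proof. by rewrite /sigma /sigma_c alpha_c_eq. Qed.

Fixpoint allmasks N : seq bitseq :=
  if N is N'.+1 then [seq true :: m | m <- allmasks N'] ++ [seq false :: m | m <- allmasks N']
  else [:: [::]].

Lemma mem_allmasks (m : bitseq) : m \in allmasks (size m).
Proof.
have inj : forall b : bool, injective (cons b) by move=> b x y [].
elim: m => [|b m IH] //=; rewrite mem_cat.
by case: b; rewrite ?(mem_map (inj true)) ?(mem_map (inj false)) IH ?orbT.
Qed.

Lemma sorted_mask N p (s : seq nat) : sorted ltn s -> (forall x, x \in s -> p <= x < p + N) ->
  exists m, size m = N /\ s = mask m (iota p N).
Proof.
elim: N p s => [|N IH] p s srt hs.
  exists [::]; split => //; case: s srt hs => // x t _ /(_ x); rewrite inE eqxx => /(_ isT); lia.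
case: s srt hs => [|x t] srt hs.
  by exists (nseq N.+1 false); rewrite size_nseq mask_false.
have allt : forall y, y \in t -> x < y.
  by move: srt; rewrite (sorted_pairwise ltn_trans) /= => /andP[/allP h _].
have st : sorted ltn t by move: srt; rewrite /= => /path_sorted.
case: (eqVneq x p) => [exp|xp].
  have [m [sm em]] := IH p.+1 t st (fun y yt => ltac:(have := hs y; rewrite inE yt orbT => /(_ isT); have := allt y yt; lia)).
  by exists (true :: m); rewrite /= sm em exp.
have [m [sm em]] := IH p.+1 (x :: t) srt (fun y yt => ltac:(have := hs y yt; have := hs x; rewrite inE eqxx => /(_ isT); move: yt; rewrite inE => /orP[/eqP ->|/allt]; move: xp => /eqP; lia)).
by exists (false :: m); rewrite /= sm em.
Qed.

Lemma gapset_lt s : is_gapset s -> forall x, x \in s -> x < 2 * size s.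
Proof.
move=> gs x xs; have [srt pos cl] := gapset_P gs.
have uq : uniq s := sorted_uniq ltn_trans ltnn srt.
have sn : s != [::] by case: (s) xs.
have GF : forall y, y \in s -> y <= last 0 s by move=> y; apply: sorted_le_last.
have c := @count_iota_mem s (last 0 s).+1 uq (fun y ys => ltac:(have := GF y ys; lia)).
have := @pairing_sym (fun y => y \in s) (last 0 s) 0 (last 0 s).+1 isT ltac:(lia).
have PF : last 0 s \in s := mem_last0 sn.
have P0 : 0 \notin s by apply/negP => /pos.
have po : forall y, 0 <= y < (last 0 s).+1 -> (y \in s) || (last 0 s - y \in s).
  by move=> y /andP[_ hy]; apply: (@pair_or (fun y => y \in s) P0 cl).
move=> /(_ po).
rewrite c subn0. have := GF x xs. lia.
Qed.

Definition check1 :=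
  all (fun m => let G := mask m (iota 1 7) in
     (in_Gk (2 * 1) (3 * 1 + 1) G && (depth G <= 3)) ==>
     (in_Gk (2 * 1 + 1) (3 * 1 + 1 + 1) (sigma_c (2 * 1) G) && ~~ pseudo_symmetric (sigma_c (2 * 1) G)))
  (allmasks 7).

Lemma check1_ok : check1. Proof. by vm_compute. Qed.

Definition check2 :=
  all (fun m => let H := mask m (iota 1 9) in
     (in_Gk (2 * 1 + 1) (3 * 1 + 1 + 1) H && ~~ pseudo_symmetric H) ==>
     has (fun mG => let G := mask mG (iota 1 7) in
          in_Gk (2 * 1) (3 * 1 + 1) G && (depth G <= 3) && (sigma_c (2 * 1) G == H)) (allmasks 7))
  (allmasks 9).

Lemma check2_ok : check2. Proof. by vm_compute. Qed.

Lemma partA1 G : in_Gk (2 * 1) (3 * 1 + 1) G -> depth G <= 3 ->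
  in_Gk (2 * 1 + 1) (3 * 1 + 1 + 1) (sigma (2 * 1) G) && ~~ pseudo_symmetric (sigma (2 * 1) G).
Proof.
move=> hG dG. have := hG => /and3P[gs _ /eqP sz].
have [srt pos _] := gapset_P gs.
have [m [sm em]] := @sorted_mask 7 1 G srt (fun x xs => ltac:(have := pos x xs; have := gapset_lt gs xs; move: sz; rewrite /genus => ->; lia)).
have := allP check1_ok m; rewrite -sm mem_allmasks sm => /(_ isT) /=.
by rewrite -em hG dG sigma_c_eq.
Qed.

Lemma partB1 H : in_Gk (2 * 1 + 1) (3 * 1 + 1 + 1) H -> ~~ pseudo_symmetric H ->
  exists G, [/\ in_Gk (2 * 1) (3 * 1 + 1) G, depth G <= 3 & sigma (2 * 1) G = H].
Proof.
move=> hH nps. have := hH => /and3P[gs _ /eqP sz].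
have [srt pos _] := gapset_P gs.
have [m [sm em]] := @sorted_mask 9 1 H srt (fun x xs => ltac:(have := pos x xs; have := gapset_lt gs xs; move: sz; rewrite /genus => ->; lia)).
have := allP check2_ok m; rewrite -sm mem_allmasks sm => /(_ isT) h; cbv beta zeta in h; move: h.
rewrite -em hH nps => /hasP[mG _ /andP[/andP[h1 h2] /eqP h3]].
by exists (mask mG (iota 1 7)); rewrite sigma_c_eq.
Qed.

Theorem mainTheorem2 (n : nat) (hn : 0 < n) :
  let g := 3 * n + 1 in
  (forall G : seq nat, in_Gk (2 * n) g G -> depth G <= 3 ->
     ~~ pseudo_symmetric (sigma (2 * n) G)) /\
  (forall H : seq nat,
     (in_Gk (2 * n + 1) (g + 1) H && ~~ pseudo_symmetric H) <->
     (exists G : seq nat,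
        [/\ in_Gk (2 * n) g G, depth G <= 3 & sigma (2 * n) G = H])).
Proof.
move=> g; rewrite /g.
have [e1|n1] : n = 1 \/ 1 < n by lia.
  subst n; split.
    by move=> G hG dG; case/andP: (partA1 hG dG).
  move=> H; split; first by case/andP => h1 h2; exact: partB1.
  by case=> G [hG dG <-]; exact: partA1.
split.
  by move=> G hG dG; case/andP: (partA n1 hG dG).
move=> H; split; first by case/andP => h1 h2; exact: partB.
by case=> G [hG dG <-]; exact: partA.
Qed.
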